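(* For $(\mu_0^2,\mu_1^2,\mu_\infty^2)\in[0,1)^3$ put $s=\mu_0^2+\mu_1^2+\mu_\infty^2$ and $t=\mu_0^2\mu_1^2+\mu_1^2\mu_\infty^2+\mu_\infty^2\mu_0^2$. The domain in the $(s,t)$-plane of all such points $(s,t)$ is the region bounded by the curves \[ t=\frac{s^2}{3},\quad t=0,\quad t=s-1,\quad t=2s-3, \] (i.e. its closure is $\{(s,t): 0\le s\le 3,\ \max(0,s-1,2s-3)\le t\le s^2/3\}$), and it is divided into two parts by the curve $D=0$, where $D=(s+1)^2-4(t+1)$.
   Context: $D$ equals the discriminant $(\mu_\infty^2+\mu_0^2-\mu_1^2-1)^2-4(1-\mu_0^2)(1-\mu_\infty^2)$ of the numerator $(1-\mu_\infty^2)x^2+(\mu_\infty^2+\mu_0^2-\mu_1^2-1)x+1-\mu_0^2$ of the coefficient $q$ of the SL-form of the hypergeometric equation. *)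

(* Defs.v *)
From HB Require Import structures.
From mathcomp Require Import all_boot all_order all_algebra.
From mathcomp Require Import all_classical all_reals all_analysis.
Unset Printing Implicit Defensive.
Import Order.TTheory GRing.Theory Num.Theory numFieldNormedType.Exports.
Local Open Scope classical_set_scope.
Local Open Scope ring_scope.

(* The variables m0, m1, minf stand for mu_0^2, mu_1^2, mu_infty^2. *)
Definition s_of {R : realType} (m0 m1 minf : R) : R := m0 + m1 + minf.
Definition t_of {R : realType} (m0 m1 minf : R) : R := m0 * m1 + m1 * minf + minf * m0.

Definition st_domain (R : realType) : set (R * R) :=
  [set p | exists m0 m1 minf : R,
     [/\ 0 <= m0 < 1, 0 <= m1 < 1, 0 <= minf < 1 &
         p = (s_of m0 m1 minf, t_of m0 m1 minf) :> R * R]].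

Definition Dst {R : realType} (s t : R) : R := (s + 1) ^+ 2 - 4 * (t + 1).

Definition st_region (R : realType) : set (R * R) :=
  [set p | 0 <= p.1 <= 3 /\
     Num.max 0 (Num.max (p.1 - 1) (2 * p.1 - 3)) <= p.2 <= p.1 ^+ 2 / 3].

(* Main.v *)
Require Import Defs.
From HB Require Import structures.
From mathcomp Require Import all_boot all_order all_algebra.
From mathcomp Require Import all_classical all_reals all_analysis.
Import Order.TTheory GRing.Theory Num.Theory numFieldNormedType.Exports.
Local Open Scope classical_set_scope.
Local Open Scope ring_scope.
From mathcomp Require Import ring lra.

Lemma ballRR (R : realType) (p q : R * R) e :
  ball p e q <-> (`|p.1 - q.1| < e /\ `|p.2 - q.2| < e).
Proof.
case: p q => [a b] [c d] /=. rewrite /ball /= /prod_ball /=.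
by rewrite -!ball_normE /ball_ /=.
Qed.

Lemma regionP (R : realType) (s t : R) :
  st_region R (s, t) <-> [/\ 0 <= s, s <= 3, 0 <= t & s - 1 <= t] /\ (2 * s - 3 <= t /\ 3 * t <= s ^+ 2).
Proof.
rewrite /st_region /=; split.
- move=> [/andP [h1 h2] /andP [h3 h4]].
  move: h3; rewrite !ge_max => /andP [h5 /andP [h6 h7]].
  do 2 split => //; lra.
- move=> [[h1 h2 h3 h4] [h5 h6]]; split; first by rewrite h1 h2.
  rewrite !ge_max h3 h4 h5 /=. lra.
Qed.

Lemma image_region (R : realType) (a b c : R) :
  0 <= a <= 1 -> 0 <= b <= 1 -> 0 <= c <= 1 ->
  st_region R (s_of a b c, t_of a b c).
Proof.
move=> /andP [a0 a1] /andP [b0 b1] /andP [c0 c1].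
rewrite regionP /s_of /t_of; do 2 split; try nra.
- have h1 : 0 <= (1 - a) * (1 - b) by nra.
  have h2 : 0 <= (1 - a) * (1 - b) * (1 - c) by apply: mulr_ge0; lra.
  have h3 : 0 <= a * b * c by apply: mulr_ge0; [apply: mulr_ge0|]; lra.
  nra.
- have := sqr_ge0 (a - b); have := sqr_ge0 (b - c); have := sqr_ge0 (c - a).
  rewrite !expr2 => *; nra.
Qed.

Lemma region_preimage (R : realType) (s t : R) :
  st_region R (s, t) -> exists a b c : R,
    [/\ 0 <= a <= 1, 0 <= b <= 1, 0 <= c <= 1 &
        s = s_of a b c /\ t = t_of a b c].
Proof.
rewrite regionP => [[[h1 h2 h3 h4] [h5 h6]]].
have [hA|hB] := lerP ((s + 3) * (s - 1)) (4 * t).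
- pose r := Num.sqrt (s ^+ 2 - 3 * t).
  have r0 : 0 <= r by exact: sqrtr_ge0. 
  have r2 : r ^+ 2 = s ^+ 2 - 3 * t by rewrite sqr_sqrtr; lra.
  have rs : r <= s by rewrite expr2 in r2 *; nra.
  have r3 : 2 * r <= 3 - s by rewrite expr2 in r2 *; nra.
  exists ((s + 2 * r) / 3), ((s - r) / 3), ((s - r) / 3).
  rewrite /s_of /t_of; split; [apply/andP; split; lra|apply/andP; split; lra|apply/andP; split; lra|].
  split; first lra.
  rewrite expr2 in r2; nra.
- have s1 : 1 < s by nra.
  pose w := Num.sqrt ((s - 1) ^+ 2 - 4 * (t - (s - 1))).
  have w0 : 0 <= w by exact: sqrtr_ge0. 
  have w2 : w ^+ 2 = (s - 1) ^+ 2 - 4 * (t - (s - 1)).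
    rewrite sqr_sqrtr //. nra.
  have ws : w <= s - 1 by rewrite !expr2 in w2 *; nra.
  have w3 : w <= 3 - s by rewrite !expr2 in w2 *; nra.
  exists 1, ((s - 1 + w) / 2), ((s - 1 - w) / 2).
  rewrite /s_of /t_of; split; [apply/andP; split; lra|apply/andP; split; lra|apply/andP; split; lra|].
  split; first lra.
  rewrite !expr2 in w2; nra.
Qed.
Lemma region_sub_closure (R : realType) : st_region R `<=` closure (st_domain R).
Proof.
move=> [s t] hp B /nbhs_ballP [e /= e0 hB].
have [a [b [c [/andP[a0 a1] /andP[b0 b1] /andP[c0 c1] [hs ht]]]]] := region_preimage _ _ _ hp.
move/(regionP R s t): hp => [[h1 h2 h3 h4] [h5 h6]].
pose d := e / (e + 8).
have e8 : 0 < e + 8 by lra.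
have hd : d * (e + 8) = e by rewrite /d divfK //; apply/lt0r_neq0.
have d0 : 0 < d by rewrite /d divr_gt0.
have d1 : d < 1 by rewrite /d ltr_pdivrMr // mul1r; lra.
have d8 : 8 * d < e.
  have : d * e > 0 by apply: mulr_gt0.
  rewrite mulrDr in hd; lra.
pose l := 1 - d.
have l0 : 0 <= l by rewrite /l; lra.
have l1 : l < 1 by rewrite /l; lra.
have hl : forall x, 0 <= x <= 1 -> 0 <= l * x < 1.
  move=> x /andP [x0 x1]; apply/andP; split; first exact: mulr_ge0.
  apply: (le_lt_trans _ l1); rewrite -[leRHS]mulr1; exact: ler_wpM2l.
exists (s_of (l * a) (l * b) (l * c), t_of (l * a) (l * b) (l * c)); split.
- exists (l * a), (l * b), (l * c); split => //; apply: hl; apply/andP; split => //.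
- apply: hB; apply/ballRR => /=.
  have -> : s_of (l * a) (l * b) (l * c) = s - d * s by rewrite hs /s_of /l; ring.
  have -> : t_of (l * a) (l * b) (l * c) = t - d * (2 - d) * t by rewrite ht /t_of /l; ring.
  have s9 : s * s <= 3 * 3 := ler_pM h1 h1 h2 h2.
  have t3 : t <= 3 by rewrite expr2 in h6; lra.
  have ds : d * s <= d * 3 by apply: ler_wpM2l; lra.
  have dt' : (2 - d) * t <= 2 * 3 by apply: ler_pM; lra.
  have dt : d * ((2 - d) * t) <= d * (2 * 3) by apply: ler_wpM2l; lra.
  rewrite mulrA in dt.
  have dt0 : 0 <= d * (2 - d) * t by apply: mulr_ge0 => //; apply: mulr_ge0; lra.
  have ds0 : 0 <= d * s by apply: mulr_ge0; lra.
  have -> : s - (s - d * s) = d * s by ring.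
  have -> : t - (t - d * (2 - d) * t) = d * (2 - d) * t by ring.
  rewrite !ltr_norml; split; apply/andP; split; lra.
Qed.

Lemma closure_sub_region (R : realType) : closure (st_domain R) `<=` st_region R.
Proof.
move=> [s t] hp.
have Hn : forall e : R, 0 < e -> exists q1 q2 : R,
    (([/\ 0 <= q1, q1 <= 3, 0 <= q2 & q1 - 1 <= q2] /\ (2 * q1 - 3 <= q2 /\ 3 * q2 <= q1 ^+ 2))
     /\ (`|s - q1| < e /\ `|t - q2| < e)).
  move=> e e0.
  have [[q1 q2] [[a [b [c [ha hb hc hq]]]] /ballRR /= hB]] :=
    hp _ (nbhsx_ballx (s, t) e e0).
  exists q1, q2; split => //.
  apply/(regionP R q1 q2).
  move: ha hb hc => /andP[? ?] /andP[? ?] /andP[? ?].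
  case: hq => -> ->; apply: image_region; apply/andP; split; lra.
have lin : forall (x y z : R), (forall q1 q2 : R,
    [/\ 0 <= q1, q1 <= 3, 0 <= q2 & q1 - 1 <= q2] /\ (2 * q1 - 3 <= q2 /\ 3 * q2 <= q1 ^+ 2) ->
    0 <= x * q1 + y * q2 + z) -> `|x| <= 2 -> `|y| <= 2 -> 0 <= x * s + y * t + z.
  move=> x y z H hx hy; rewrite leNgt; apply/negP => hneg.
  pose dd := - (x * s + y * t + z).
  have dd0 : 0 < dd / 8 by rewrite divr_gt0 //; rewrite /dd; lra.
  have [q1 [q2 [hq [h1 h2]]]] := Hn _ dd0.
  have Hq := H _ _ hq.
  have k1 : `|x * s - x * q1| <= 2 * (dd / 8).
    rewrite -mulrBr normrM; apply: ler_pM => //; exact: ltW.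
  have k2 : `|y * t - y * q2| <= 2 * (dd / 8).
    rewrite -mulrBr normrM; apply: ler_pM => //; exact: ltW.
  move: k1 k2; rewrite !ler_norml => /andP[k1 k1'] /andP[k2 k2'].
  rewrite /dd in dd0 k1 k2 k1' k2'. move: hneg Hq k1 k2.
  generalize (x * s) (y * t) (x * q1) (y * q2) => A B C D. move=> *. lra.
have L1 : 0 <= s.
  suff : 0 <= 1 * s + 0 * t + 0 by lra.
  apply: lin; first by move=> q1 q2 [[? ? ? ?] [? ?]]; lra.
    by rewrite ?normrN ?normr1 ?normr0 ?ger0_norm //; lra.
  by rewrite ?normrN ?normr1 ?normr0 ?ger0_norm //; lra.
have L2 : s <= 3.
  suff : 0 <= (-1) * s + 0 * t + 3 by lra.
  apply: lin; first by move=> q1 q2 [[? ? ? ?] [? ?]]; lra.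
    by rewrite ?normrN ?normr1 ?normr0 ?ger0_norm //; lra.
  by rewrite ?normrN ?normr1 ?normr0 ?ger0_norm //; lra.
have L3 : 0 <= t.
  suff : 0 <= 0 * s + 1 * t + 0 by lra.
  apply: lin; first by move=> q1 q2 [[? ? ? ?] [? ?]]; lra.
    by rewrite ?normrN ?normr1 ?normr0 ?ger0_norm //; lra.
  by rewrite ?normrN ?normr1 ?normr0 ?ger0_norm //; lra.
have L4 : s - 1 <= t.
  suff : 0 <= (-1) * s + 1 * t + 1 by lra.
  apply: lin; first by move=> q1 q2 [[? ? ? ?] [? ?]]; lra.
    by rewrite ?normrN ?normr1 ?normr0 ?ger0_norm //; lra.
  by rewrite ?normrN ?normr1 ?normr0 ?ger0_norm //; lra.
have L5 : 2 * s - 3 <= t.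
  suff : 0 <= (-2) * s + 1 * t + 3 by lra.
  apply: lin; first by move=> q1 q2 [[? ? ? ?] [? ?]]; lra.
    by rewrite ?normrN ?normr1 ?normr0 ?ger0_norm //; lra.
  by rewrite ?normrN ?normr1 ?normr0 ?ger0_norm //; lra.
have L6 : 3 * t <= s ^+ 2.
  rewrite leNgt; apply/negP => hneg.
  pose d := 3 * t - s ^+ 2.
  have d0 : 0 < d by rewrite /d; lra.
  have p0 : 0 < 2 * s + 8 + d by lra.
  pose e := d / (2 * s + 8 + d).
  have e0 : 0 < e by rewrite /e divr_gt0.
  have hd : e * (2 * s + 8 + d) = d by rewrite /e divfK //; apply/lt0r_neq0.
  have e1 : e < 1 by rewrite /e ltr_pdivrMr // mul1r; lra.
  have [q1 [q2 [[[? ? ? ?] [? hq]] [h1 h2]]]] := Hn _ e0.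
  move: h1 h2; rewrite !ltr_norml => /andP[h1 h1'] /andP[h2 h2'].
  have a1 : 3 * t < q1 ^+ 2 + 3 * e by lra.
  have a2 : q1 ^+ 2 <= (s + e) ^+ 2 by rewrite !expr2; apply: ler_pM; lra.
  have a3 : (s + e) ^+ 2 + 3 * e <= s ^+ 2 + e * (2 * s + 8 + d).
    have h : e * (e + 3) <= e * (8 + d) by apply: ler_wpM2l; lra.
    have -> : (s + e) ^+ 2 + 3 * e = s ^+ 2 + e * (2 * s) + e * (e + 3) by ring.
    have -> : s ^+ 2 + e * (2 * s + 8 + d) = s ^+ 2 + e * (2 * s) + e * (8 + d) by ring.
    lra.
  rewrite hd /d in a3; lra.
by apply/regionP.
Qed.

Lemma dom_pt (R : realType) (a b c : R) :
  0 <= a < 1 -> 0 <= b < 1 -> 0 <= c < 1 ->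
  st_domain R (s_of a b c, t_of a b c).
Proof. by move=> ha hb hc; exists a, b, c. Qed.

Theorem lemma2p4 (R : realType) :
  closure (st_domain R) = st_region R /\
  (exists p, st_domain R p /\ 0 < Dst p.1 p.2) /\
  (exists p, st_domain R p /\ Dst p.1 p.2 < 0) /\
  (exists p, st_domain R p /\ Dst p.1 p.2 = 0).
Proof.
split; first by apply/seteqP; split; [exact: closure_sub_region | exact: region_sub_closure].
split.
  exists (s_of (7/8 : R) (7/8) 0, t_of (7/8 : R) (7/8) 0); split.
    by apply: dom_pt; apply/andP; split; lra.
  rewrite /Dst /s_of /t_of /= !expr2; lra.
split.
  exists (s_of (0 : R) 0 0, t_of (0 : R) 0 0); split.
    by apply: dom_pt; apply/andP; split; lra.
  rewrite /Dst /s_of /t_of /= !expr2; lra.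
exists (s_of (3/4 : R) (3/4) 0, t_of (3/4 : R) (3/4) 0); split.
  by apply: dom_pt; apply/andP; split; lra.
rewrite /Dst /s_of /t_of /= !expr2; lra.
Qed.
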